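(* Let $f:\mathbb{R}^{n_x}\to\mathbb{R}^{n_y}$ be a deterministic predictor and let $\bar D:\mathbb{R}^{n_x}\to\mathbb{R}^{n_y\times n_u}$ be given (in the paper, $\bar D(x)=\nabla_u \tilde f(x,u)|_{u=0}$ for an augmented function $\tilde f(x,u)$ with $\tilde f(x,\mathbf 0)=f(x)$). Fix a generator template $G_u\in\mathbb{R}^{n_u\times\nu}$, an integer $n_r\ge 1$, orthogonal matrices $R_1,\dots,R_{n_r}\in\mathbb{R}^{n_y\times n_y}$ and $R_0=\mathbf I$. For $\alpha\in\mathbb{R}^{\nu}_{\ge 0}$ define the uncertainty set $\mathcal U_\alpha=\langle \mathbf 0, G_u\,\mathrm{diag}(\alpha)\rangle$ and the zono-conformal predictor $\mathcal Y_\alpha(x)=\{f(x)+\bar D(x)u\mid u\in\mathcal U_\alpha\}$. Given finitely many data points $(x^{(m)},y^{(m)})\in\mathbb{R}^{n_x}\times\mathbb{R}^{n_y}$, $m\in\mathcal M_{\mathrm{cal}}$, consider the linear program in the variables $\alpha\in\mathbb{R}^\nu$ and $\beta_m\in\mathbb{R}^\nu$ ($m\in\mathcal M_{\mathrm{cal}}$): $$\min_{\alpha,\beta}\ \sum_{m\in\mathcal M_{\mathrm{cal}}}\sum_{i=0}^{n_r}\mathbf 1^\top\bigl|R_i\bar D(x^{(m)})G_u\bigr|\,\alpha$$ subject to, for all $m\in\mathcal M_{\mathrm{cal}}$: $\mathbf 0\le\alpha$, $\mathbf 0\le \alpha+\beta_m$, $\mathbf 0\le\alpha-\beta_m$, and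 $y^{(m)}-f(x^{(m)})=\bar D(x^{(m)})G_u\beta_m$. Then, if $(\alpha^*,\beta^* )$ is an optimal solution of this linear program, $\alpha^*$ is an optimal solution of the problem $$\min_{\alpha\in\mathbb{R}^\nu_{\ge0}}\ \sum_{m\in\mathcal M_{\mathrm{cal}}}\sum_{i=0}^{n_r}\bigl\|R_i\,\mathcal Y_\alpha(x^{(m)})\bigr\|_I\quad\text{s.t.}\quad y^{(m)}\in\mathcal Y_\alpha(x^{(m)})\ \ \forall m\in\mathcal M_{\mathrm{cal}}.$$
   Context: A zonotope with center $c\in\mathbb{R}^n$ and generator matrix $G\in\mathbb{R}^{n\times\nu}$ is $\langle c,G\rangle=\{c+\sum_{i=1}^{\nu}\lambda_iG_{(\cdot,i)}\mid \lambda_i\in[-1,1]\}$. The interval norm of $\langle c,G\rangle$ is $\|\langle c,G\rangle\|_I=\mathbf 1^\top|G|\mathbf 1$, where $|G|$ is the elementwise absolute value. For a matrix $R$, $R\langle c,G\rangle$ is represented as $\langle Rc,RG\rangle$; in particular $\mathcal Y_\alpha(x)=\langle f(x),\bar D(x)G_u\mathrm{diag}(\alpha)\rangle$ and $\|R_i\mathcal Y_\alpha(x)\|_I=\mathbf 1^\top|R_i\bar D(x)G_u\mathrm{diag}(\alpha)|\mathbf 1$. $\mathrm{diag}(\alpha)$ is the diagonal matrix with diagonal $\alpha$; inequalities between vectors are elementwise. *)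

(* Defs.v *)
From HB Require Import structures.
From mathcomp Require Import all_boot all_order all_algebra.
Set Implicit Arguments. Unset Strict Implicit. Unset Printing Implicit Defensive.
Import Order.TTheory GRing.Theory Num.Theory.
Local Open Scope ring_scope.

Definition cV_le (R : realFieldType) (n : nat) (a b : 'cV[R]_n) : Prop :=
  forall i, a i 0 <= b i 0.

Definition in_zonotope (R : realFieldType) (n v : nat)
    (c : 'cV[R]_n) (G : 'M[R]_(n, v)) (y : 'cV[R]_n) : Prop :=
  exists lam : 'cV[R]_v, (forall i, -1 <= lam i 0 <= 1) /\ y = c + G *m lam.

Definition diagc (R : realFieldType) (v : nat) (alpha : 'cV[R]_v) : 'M[R]_v :=
  diag_mx alpha^T.

Definition in_U (R : realFieldType) (nu v : nat) (Gu : 'M[R]_(nu, v))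
    (alpha : 'cV[R]_v) (u : 'cV[R]_nu) : Prop :=
  in_zonotope 0 (Gu *m diagc alpha) u.

Definition in_Y (R : realFieldType) (nx ny nu v : nat)
    (f : 'cV[R]_nx -> 'cV[R]_ny) (Dbar : 'cV[R]_nx -> 'M[R]_(ny, nu))
    (Gu : 'M[R]_(nu, v)) (alpha : 'cV[R]_v) (x : 'cV[R]_nx) (y : 'cV[R]_ny) : Prop :=
  exists u, in_U Gu alpha u /\ y = f x + Dbar x *m u.

(* Interval norm of a zonotope <c, G>: 1^T |G| 1. *)
Definition interval_norm (R : realFieldType) (n v : nat) (G : 'M[R]_(n, v)) : R :=
  \sum_(i < n) \sum_(j < v) `|G i j|.

(* ||R_i Y_alpha(x)||_I, with R_i Y_alpha(x) represented as <R_i f(x), R_i Dbar(x) G_u diag(alpha)> *)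
Definition Y_norm (R : realFieldType) (nx ny nu v : nat)
    (Dbar : 'cV[R]_nx -> 'M[R]_(ny, nu)) (Gu : 'M[R]_(nu, v))
    (Ri : 'M[R]_ny) (alpha : 'cV[R]_v) (x : 'cV[R]_nx) : R :=
  interval_norm (Ri *m (Dbar x *m Gu *m diagc alpha)).

Definition zc_cost (R : realFieldType) (nx ny nu v nr : nat) (M : finType)
    (Dbar : 'cV[R]_nx -> 'M[R]_(ny, nu)) (Gu : 'M[R]_(nu, v))
    (Rs : 'I_nr.+1 -> 'M[R]_ny) (xs : M -> 'cV[R]_nx) (alpha : 'cV[R]_v) : R :=
  \sum_(m : M) \sum_(i < nr.+1) Y_norm Dbar Gu (Rs i) alpha (xs m).

Definition lp_cost (R : realFieldType) (nx ny nu v nr : nat) (M : finType)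
    (Dbar : 'cV[R]_nx -> 'M[R]_(ny, nu)) (Gu : 'M[R]_(nu, v))
    (Rs : 'I_nr.+1 -> 'M[R]_ny) (xs : M -> 'cV[R]_nx) (alpha : 'cV[R]_v) : R :=
  \sum_(m : M) \sum_(i < nr.+1)
     \sum_(j < v) (\sum_(k < ny) `|(Rs i *m Dbar (xs m) *m Gu) k j|) * alpha j 0.

Definition lp_feasible (R : realFieldType) (nx ny nu v : nat) (M : finType)
    (f : 'cV[R]_nx -> 'cV[R]_ny) (Dbar : 'cV[R]_nx -> 'M[R]_(ny, nu))
    (Gu : 'M[R]_(nu, v)) (xs : M -> 'cV[R]_nx) (ys : M -> 'cV[R]_ny)
    (alpha : 'cV[R]_v) (beta : M -> 'cV[R]_v) : Prop :=
  cV_le 0 alpha /\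
  forall m : M,
    [/\ cV_le 0 (alpha + beta m), cV_le 0 (alpha - beta m)
      & ys m - f (xs m) = Dbar (xs m) *m Gu *m beta m].

(* Main.v *)
Require Import Defs.
From HB Require Import structures.
From mathcomp Require Import all_boot all_order all_algebra.
From mathcomp Require Import lra.
Import Order.TTheory GRing.Theory Num.Theory.
Local Open Scope ring_scope.

Lemma Ynorm_eq (R : realFieldType) (nx ny nu v : nat)
    (Dbar : 'cV[R]_nx -> 'M[R]_(ny, nu)) (Gu : 'M[R]_(nu, v))
    (Ri : 'M[R]_ny) (alpha : 'cV[R]_v) (x : 'cV[R]_nx) :
  cV_le 0 alpha ->
  Y_norm Dbar Gu Ri alpha x =
  \sum_(j < v) (\sum_(k < ny) `|(Ri *m Dbar x *m Gu) k j|) * alpha j 0.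
Proof.
move=> ha; rewrite /Y_norm /interval_norm /diagc !mulmxA mul_mx_diag.
rewrite exchange_big /=; apply: eq_bigr => j _; rewrite mulr_suml.
apply: eq_bigr => k _; rewrite !mxE normrM; congr (_ * _).
by apply: ger0_norm; have := ha j; rewrite mxE.
Qed.

Lemma inY_beta (R : realFieldType) (nx ny nu v : nat)
    (f : 'cV[R]_nx -> 'cV[R]_ny) (Dbar : 'cV[R]_nx -> 'M[R]_(ny, nu))
    (Gu : 'M[R]_(nu, v)) (alpha : 'cV[R]_v) (x : 'cV[R]_nx) (y : 'cV[R]_ny) :
  cV_le 0 alpha -> in_Y f Dbar Gu alpha x y ->
  exists beta, [/\ cV_le 0 (alpha + beta), cV_le 0 (alpha - beta)
      & y - f x = Dbar x *m Gu *m beta].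
Proof.
move=> ha [u [[lam [hl ->]]] ->].
exists (diagc alpha *m lam); split.
- move=> i; have := ha i; have := hl i; rewrite /diagc mul_diag_mx !mxE.
  case/andP => h1 h2 h3.
  have : 0 <= alpha i 0 * (1 + lam i 0) by apply: mulr_ge0 => //; lra.
  by rewrite mulrDr mulr1.
- move=> i; have := ha i; have := hl i; rewrite /diagc mul_diag_mx !mxE.
  case/andP => h1 h2 h3.
  have : 0 <= alpha i 0 * (1 - lam i 0) by apply: mulr_ge0 => //; lra.
  by rewrite mulrBr mulr1.
- by rewrite add0r addrC addKr !mulmxA.
Qed.

Lemma beta_inY (R : realFieldType) (nx ny nu v : nat)
    (f : 'cV[R]_nx -> 'cV[R]_ny) (Dbar : 'cV[R]_nx -> 'M[R]_(ny, nu))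
    (Gu : 'M[R]_(nu, v)) (alpha : 'cV[R]_v) (x : 'cV[R]_nx) (y : 'cV[R]_ny)
    (beta : 'cV[R]_v) :
  cV_le 0 (alpha + beta) -> cV_le 0 (alpha - beta) ->
  y - f x = Dbar x *m Gu *m beta -> in_Y f Dbar Gu alpha x y.
Proof.
move=> h1 h2 he.
pose lam : 'cV[R]_v := \col_j (if alpha j 0 == 0 then 0 else beta j 0 / alpha j 0).
have key : forall j, alpha j 0 * lam j 0 = beta j 0 /\ -1 <= lam j 0 <= 1.
  move=> j; have := h1 j; have := h2 j; rewrite !mxE => g2 g1.
  rewrite /lam ?mxE; case: eqP => [a0|/eqP an0].
    by rewrite a0 mulr0; split; [lra | lra].
  have ap : 0 < alpha j 0 by rewrite lt_neqAle eq_sym an0 /=; lra.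
  split; first by rewrite mulrC divfK.
  by rewrite ler_pdivlMr // ler_pdivrMr //; apply/andP; split; lra.
clearbody lam.
have hb : diagc alpha *m lam = beta.
  apply/matrixP => i j; rewrite (ord1 j) /diagc mul_diag_mx !mxE.
  by have [-> _] := key i.
exists (Gu *m diagc alpha *m lam); split.
  exists lam; split; first by move=> i; have [_ ->] := key i.
  by rewrite add0r.
by rewrite -mulmxA hb mulmxA -he addrC subrK.
Qed.

Arguments beta_inY {R nx ny nu v f Dbar Gu alpha x y beta}.
Arguments inY_beta {R nx ny nu v f Dbar Gu alpha x y}.

Theorem theorem6 (R : realFieldType) (nx ny nu v nr : nat) (M : finType)
    (f : 'cV[R]_nx -> 'cV[R]_ny) (Dbar : 'cV[R]_nx -> 'M[R]_(ny, nu))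
    (Gu : 'M[R]_(nu, v)) (Rs : 'I_nr.+1 -> 'M[R]_ny)
    (xs : M -> 'cV[R]_nx) (ys : M -> 'cV[R]_ny)
    (hnr : (0 < nr)%N)
    (hR0 : Rs ord0 = 1%:M)
    (hRorth : forall i : 'I_nr.+1, Rs i *m (Rs i)^T = 1%:M /\ (Rs i)^T *m Rs i = 1%:M)
    (astar : 'cV[R]_v) (bstar : M -> 'cV[R]_v)
    (hfeas : lp_feasible f Dbar Gu xs ys astar bstar)
    (hopt : forall (alpha : 'cV[R]_v) (beta : M -> 'cV[R]_v),
        lp_feasible f Dbar Gu xs ys alpha beta ->
        lp_cost Dbar Gu Rs xs astar <= lp_cost Dbar Gu Rs xs alpha) :
  [/\ cV_le 0 astar,
      (forall m : M, in_Y f Dbar Gu astar (xs m) (ys m))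
    & forall alpha : 'cV[R]_v, cV_le 0 alpha ->
        (forall m : M, in_Y f Dbar Gu alpha (xs m) (ys m)) ->
        zc_cost Dbar Gu Rs xs astar <= zc_cost Dbar Gu Rs xs alpha].
Proof.
case: hfeas => ha0 hb0.
have zc_lp : forall a, cV_le 0 a -> zc_cost Dbar Gu Rs xs a = lp_cost Dbar Gu Rs xs a.
  move=> a ha; rewrite /zc_cost /lp_cost; apply: eq_bigr => m _.
  apply: eq_bigr => i _; rewrite Ynorm_eq //.
split => //.
  by move=> m; case: (hb0 m) => h1 h2 h3; exact: (beta_inY h1 h2 h3).
move=> alpha ha hY.
have [beta hbeta] : exists beta : M -> 'cV[R]_v, forall m,
   [/\ cV_le 0 (alpha + beta m), cV_le 0 (alpha - beta m)
      & ys m - f (xs m) = Dbar (xs m) *m Gu *m beta m].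
  apply: (@fin_all_exists M (fun _ => 'cV[R]_v) (fun m b => [/\ cV_le 0 (alpha + b), cV_le 0 (alpha - b) & ys m - f (xs m) = Dbar (xs m) *m Gu *m b])) => m.
  exact: inY_beta ha (hY m).
rewrite !zc_lp //; apply: (hopt _ beta); split => //.
Qed.
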